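(* Let $(c_n)_{n\ge0}$ be a sequence (of elements of a commutative ring, or indeterminates) and $\alpha,\beta$ variables. Then for all positive integers $n$, $$ \det_{0\le i,j\le n-1}\big(\alpha c_{i+j}+c_{i+j+1}\big)\det_{0\le i,j\le n-1}\big(\beta c_{i+j}+c_{i+j+1}\big) =-\det_{0\le i,j\le n}\big(c_{i+j}\big)\det_{0\le i,j\le n-2}\big(\alpha\beta c_{i+j}+(\alpha+\beta)c_{i+j+1}+c_{i+j+2}\big) +\det_{0\le i,j\le n-1}\big(c_{i+j}\big)\det_{0\le i,j\le n-1}\big(\alpha\beta c_{i+j}+(\alpha+\beta)c_{i+j+1}+c_{i+j+2}\big). $$
   Context: The determinant of an empty ($0\times 0$) matrix equals $1$. *)

(* Defs.v *)
From mathcomp Require Import all_boot all_order all_algebra.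
Set Implicit Arguments. Unset Strict Implicit. Unset Printing Implicit Defensive.
Import GRing.Theory.
Local Open Scope ring_scope.

(* hdet m f = det_{0 <= i,j <= m-1} (f (i+j)), an m x m Hankel determinant;
   for m = 0 this is the empty determinant, equal to 1. *)
Definition hdet (R : comPzRingType) (m : nat) (f : nat -> R) : R :=
  \det (\matrix_(i < m, j < m) f (i + j)%N).

(* Main.v *)
Set Warnings "-notation-overridden,-ambiguous-paths,-notation-incompatible-prefix".
Require Import Defs.
From HB Require Import structures.
From mathcomp Require Import all_boot all_order all_algebra ring.
Set Implicit Arguments. Unset Strict Implicit. Unset Printing Implicit Defensive.
Import GRing.Theory.
Local Open Scope ring_scope.

Lemma jacobi_reg (S : comPzRingType) m (N : 'M[S]_(m + 2)) :
  GRing.lreg (\det N) ->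
  \det (drsubmx (\adj N)) = \det (ulsubmx N) * \det N.
Proof.
move=> reg.
set A := \adj N.
have NA := mul_mx_adj N.
rewrite -[N in N *m _](submxK N) -/A -[A in _ *m A](submxK A) mulmx_block
  scalar_mx_block in NA.
case/eq_block_mx: NA => _ h12 _ h22.
have E : N *m block_mx 1%:M (ursubmx A) 0 (drsubmx A)
   = block_mx (ulsubmx N) 0 (dlsubmx N) ((\det N)%:M).
  rewrite -[N in N *m _](submxK N) mulmx_block h12 h22.
  by rewrite !mulmx1 !mulmx0 !addr0.
have := congr1 determinant E.
rewrite det_mulmx det_ublock det_lblock det1 mul1r det_scalar => h.
apply: reg; rewrite h mulrC -mulrA; congr (_ * _).
by rewrite mulrC.
Qed.

Lemma det_eqc (S : comPzRingType) n1 n2 (e : n1 = n2) (A : 'M[S]_n1) (B : 'M[S]_n2) :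
  (forall i j, A i j = B (cast_ord e i) (cast_ord e j)) -> \det A = \det B.
Proof.
case: n2 / e B => B H; congr (\det _); apply/matrixP => i j.
by rewrite H !cast_ord_id.
Qed.

Lemma det2 (S : comPzRingType) (A : 'M[S]_2) : \det A = A 0 0 * A 1 1 - A 0 1 * A 1 0.
Proof.
rewrite (expand_det_row _ 0) !big_ord_recl big_ord0 /cofactor !det_mx11 !mxE /=.
have -> : lift (0:'I_2) (0:'I_1) = 1 by apply: val_inj.
have -> : lift (1:'I_2) (0:'I_1) = 0 by apply: val_inj.
rewrite /bump /= expr0 expr1 !mul1r mulN1r addr0 mulrN.
by [].
Qed.

Lemma jacobi_nz (R : comNzRingType) m (N : 'M[R]_(m + 2)) :
  \det (drsubmx (\adj N)) = \det (ulsubmx N) * \det N.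
Proof.
pose P := char_poly_mx (- N).
have reg : GRing.lreg (\det P) := monic_lreg (char_poly_monic (-N)).
have J := jacobi_reg reg.
have fP : map_mx (horner_eval (0:R)) P = N.
  apply/matrixP => i j; rewrite !mxE horner_evalE.
  by rewrite !hornerE /= hornerMn hornerX mul0rn sub0r opprK.
have := congr1 (horner_eval (0:R)) J.
by rewrite rmorphM -!det_map_mx map_drsubmx map_mx_adj map_ulsubmx fP.
Qed.

Lemma sgn2 (R : comPzRingType) a : (-1:R)^+(a + a) = 1.
Proof. by rewrite exprD -exprMn mulrNN mulr1 expr1n. Qed.

Lemma bumpK_aux m (i : 'I_m) : nat_of_ord i = bump m.+1 (bump m i).
Proof.
rewrite /bump (_ : (m <= i)%N = false) ?addn0; last by rewrite leqNgt ltn_ord.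
by rewrite (_ : (m.+1 <= i)%N = false) ?addn0 // leqNgt ltnS ltnW.
Qed.

Lemma desnanot_gen (R : comPzRingType) m (M : 'M[R]_(m.+2)) :
 (forall N : 'M[R]_(m+2), \det (drsubmx (\adj N)) = \det (ulsubmx N) * \det N) ->
 let m1 : 'I_(m.+2) := Ordinal (leqnSn m.+1) in
 \det M * \det (row' ord_max (col' ord_max (row' ord_max (col' ord_max M)))) =
 \det (row' ord_max (col' ord_max M)) * \det (row' m1 (col' m1 M)) -
 \det (row' m1 (col' ord_max M)) * \det (row' ord_max (col' m1 M)).
Proof.
move=> H m1.
pose N : 'M[R]_(m+2) := \matrix_(i,j) M (cast_ord (addn2 m) i) (cast_ord (addn2 m) j).
have J := H N; rewrite det2 in J.
have D : forall (r c : 'I_(m+2)) (r' c' : 'I_(m.+2)), val r = val r' -> val c = val c' ->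
   \det (row' r (col' c N)) = \det (row' r' (col' c' M)).
  move=> r c r' c' er ec.
  have e : (m+2).-1 = m.+1 by rewrite addn2.
  apply: (@det_eqc R ((m+2).-1) m.+1 e (row' r (col' c N)) (row' r' (col' c' M))) => i j; rewrite !mxE; congr (M _ _); apply: val_inj.
    by rewrite /= er.
  by rewrite /= ec.
have DN : \det N = \det M by apply: (@det_eqc R _ _ (addn2 m) N M) => i j; rewrite mxE.
have DC : \det (ulsubmx N) = \det (row' ord_max (col' ord_max (row' ord_max (col' ord_max M)))).
  apply: (@det_eqc R _ _ (erefl m) (ulsubmx N) (row' ord_max (col' ord_max (row' ord_max (col' ord_max M))))) => i j; rewrite !mxE; congr (M _ _); apply: val_inj.
    by rewrite /=; apply: bumpK_aux.
  by rewrite /=; apply: bumpK_aux.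
rewrite !mxE /cofactor in J.
have v0 : val (rshift m (0:'I_2)) = val m1 by rewrite /= addn0.
have v1 : val (rshift m (1:'I_2)) = val (ord_max : 'I_(m.+2)) by rewrite /= addn1.
rewrite (D _ _ _ _ v0 v0) (D _ _ _ _ v1 v1) (D _ _ _ _ v1 v0) (D _ _ _ _ v0 v1) in J.
rewrite (addnC (rshift m (1:'I_2))) !sgn2 !mul1r mulrACA -exprD sgn2 mul1r in J.
rewrite mulrC -DC -DN -J.
by congr (_ - _); rewrite mulrC.
Qed.

Definition nzT (R : comPzRingType) (h : (1:R) != 0) : Type := R.
HB.instance Definition _ (R : comPzRingType) (h : (1:R) != 0) :=
  GRing.ComPzRing.on (nzT h).
HB.instance Definition _ (R : comPzRingType) (h : (1:R) != 0) :=
  GRing.PzSemiRing_isNonZero.Build (nzT h) h.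

Lemma jacobi_pz (R : comPzRingType) (h : (1:R) != 0) m (N : 'M[R]_(m+2)) :
  \det (drsubmx (\adj N)) = \det (ulsubmx N) * \det N.
Proof. exact: (@jacobi_nz (nzT h) m N). Qed.
Definition Fm (R : comPzRingType) k (x : R) : 'M[R]_(k.+1) :=
  \matrix_(i, j) (if (i == k :> nat) then (j == 0 :> nat)%:R
                  else x * (j == i :> nat)%:R + (j == i.+1 :> nat)%:R).

Definition hk (R : comPzRingType) m (f : nat -> R) : 'M[R]_m :=
  \matrix_(i < m, j < m) f (i + j)%N.

Lemma sum_delta (R : comPzRingType) k (g : nat -> R) t : (t < k)%N ->
  \sum_(a < k) (a == t :> nat)%:R * g a = g t.
Proof.
move=> tk; rewrite (bigD1 (Ordinal tk)) //= eqxx mul1r big1 ?addr0 // => a ne.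
suff -> : (a == t :> nat) = false by rewrite mul0r.
by apply/negbTE; move: ne; apply: contra => /eqP e; apply/eqP/val_inj.
Qed.

Lemma sum_Fm (R : comPzRingType) k (x : R) (i : 'I_k.+1) (g : nat -> R) :
  \sum_(a < k.+1) Fm k x i a * g a = if (i == k :> nat) then g 0 else x * g i + g i.+1.
Proof.
under eq_bigr do rewrite mxE.
case: eqP => hi; first exact: sum_delta.
under eq_bigr do rewrite mulrDl -mulrA.
rewrite big_split /= -mulr_sumr !sum_delta //.
by rewrite ltnS ltn_neqAle; apply/andP; split; [apply/eqP|rewrite -ltnS].
Qed.

Lemma det_Fm (R : comPzRingType) k (x : R) : \det (Fm k x) = (-1) ^+ k.
Proof.
rewrite (expand_det_row _ ord_max) big_ord_recl big1 ?addr0; last first.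
  by move=> j _; rewrite mxE eqxx /= mul0r.
rewrite mxE eqxx /= mul1r /cofactor addn0 det_trig.
  rewrite big1 ?mulr1 // => i _; rewrite !mxE lift_max lift0 /=.
  rewrite ifF; last exact: ltn_eqF (ltn_ord i).
  by rewrite eqxx (gtn_eqF (ltnSn i)) mulr0 add0r.
apply/is_trig_mxP => i j lij; rewrite !mxE lift_max lift0 /=.
case: (i == k :> nat) => //=.
by rewrite eqSS (gtn_eqF lij) (gtn_eqF (leqW lij)) mulr0 add0r.
Qed.

Lemma FmH (R : comPzRingType) k (x : R) (h : nat -> nat -> R) :
  Fm k x *m (\matrix_(a < k.+1, b < k.+1) h a b) =
  \matrix_(i, j) (if (i == k :> nat) then h 0%N j else x * h i j + h i.+1 j).
Proof.
apply/matrixP => i j; rewrite [LHS]mxE [RHS]mxE.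
under eq_bigr do rewrite [X in _ * X]mxE.
exact: (sum_Fm _ _ (fun a => h a j)).
Qed.

Lemma HFmT (R : comPzRingType) k (y : R) (h : nat -> nat -> R) :
  (\matrix_(a < k.+1, b < k.+1) h a b) *m (Fm k y)^T =
  \matrix_(i, j) (if (j == k :> nat) then h i 0%N else y * h i j + h i j.+1).
Proof.
apply/matrixP => i j; rewrite [LHS]mxE [RHS]mxE.
under eq_bigr do rewrite [X in _ * X]mxE [X in X * _]mxE mulrC.
exact: (sum_Fm _ _ (fun a => h i a)).
Qed.

Lemma FHF (R : comPzRingType) k (x y : R) (f : nat -> R) :
  Fm k x *m hk k.+1 f *m (Fm k y)^T =
  \matrix_(i, j) (if (i == k :> nat) then (if (j == k :> nat) then f 0%N else y * f j + f j.+1)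
                 else if (j == k :> nat) then x * f i + f i.+1
                 else x * y * f (i + j)%N + (x + y) * f (i + j).+1 + f (i + j).+2).
Proof.
rewrite /hk (FmH _ _ (fun a b => f (a + b)%N)).
rewrite (HFmT _ _ (fun i j => if (i == k :> nat) then f (0 + j)%N else x * f (i + j)%N + f (i.+1 + j)%N)).
apply/matrixP => i j; rewrite !mxE.
case: (i == k :> nat); case: (j == k :> nat); rewrite ?addn0 ?addSn ?addnS //.
ring.
Qed.

Lemma FH (R : comPzRingType) k (x y : R) (f : nat -> R) :
  Fm k x *m hk k.+1 (fun t => y * f t + f t.+1) =
  \matrix_(i, j) (if (i == k :> nat) then y * f j + f j.+1
                 else x * y * f (i + j)%N + (x + y) * f (i + j).+1 + f (i + j).+2).
Proof.
rewrite /hk (FmH _ _ (fun a b => y * f (a + b)%N + f (a + b).+1)); apply/matrixP => i j; rewrite !mxE.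
case: (i == k :> nat); rewrite ?addn0 ?addSn ?addnS //.
ring.
Qed.

Lemma HF (R : comPzRingType) k (x y : R) (f : nat -> R) :
  hk k.+1 (fun t => x * f t + f t.+1) *m (Fm k y)^T =
  \matrix_(i, j) (if (j == k :> nat) then x * f i + f i.+1
                 else x * y * f (i + j)%N + (x + y) * f (i + j).+1 + f (i + j).+2).
Proof.
rewrite /hk (HFmT _ _ (fun a b => x * f (a + b)%N + f (a + b).+1)); apply/matrixP => i j; rewrite !mxE.
case: (j == k :> nat); rewrite ?addn0 ?addSn ?addnS //.
ring.
Qed.

Lemma lift_m1 m (i : 'I_m.+1) :
  nat_of_ord (lift (Ordinal (leqnSn m.+1)) i) = if (i == m :> nat) then m.+1 else i.
Proof.
rewrite /= /bump; case: eqP => [->|ne]; first by rewrite leqnn.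
rewrite (_ : (m <= i)%N = false) ?addn0 //.
by apply/negbTE; rewrite -ltnNge ltn_neqAle; apply/andP; split; [apply/eqP|rewrite -ltnS].
Qed.

Lemma alg (R : comPzRingType) (s t H2 Q H1 Q' Aa Ab : R) :
  s * s = 1 -> t * t = 1 ->
  t * H2 * t * Q = Q' * (s * H1 * s) - s * Ab * (Aa * s) ->
  Aa * Ab = - (H2 * Q) + H1 * Q'.
Proof.
move=> ss tt E.
have E' : H2 * Q = Q' * H1 - Ab * Aa.
  have -> : H2 * Q = (t * t) * (H2 * Q) by rewrite tt mul1r.
  have -> : Q' * H1 - Ab * Aa = (s * s) * (Q' * H1 - Ab * Aa) by rewrite ss mul1r.
  transitivity (t * H2 * t * Q); first by ring.
  by rewrite E; ring.
by rewrite E'; ring.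
Qed.

Theorem lemma9 (R : comPzRingType) (c : nat -> R) (a b : R) (n : nat) :
  (0 < n)%N ->
  hdet n (fun k => a * c k + c k.+1) * hdet n (fun k => b * c k + c k.+1)
  = - (hdet n.+1 c *
       hdet n.-1 (fun k => a * b * c k + (a + b) * c k.+1 + c k.+2))
    + hdet n c * hdet n (fun k => a * b * c k + (a + b) * c k.+1 + c k.+2).
Proof.
case: n => // m _.
case: (eqVneq (1:R) 0) => [e|h].
  have z : forall x : R, x = 0 by move=> x; rewrite -[x]mulr1 e mulr0.
  by rewrite [LHS]z [RHS]z.
set u := (fun k => a * b * c k + (a + b) * c k.+1 + c k.+2).
pose e (i j : nat) := if i == m.+1 then (if j == m.+1 then c 0%N else b * c j + c j.+1)
   else if j == m.+1 then a * c i + c i.+1 else u (i + j)%N.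
pose M : 'M[R]_(m.+2) := \matrix_(i, j) e i j.
move: (desnanot_gen M (@jacobi_pz R h m)) => /= Des.
have hb : forall (i : 'I_m.+1), (i == m.+1 :> nat) = false.
  by move=> i; apply: ltn_eqF.
have hb' : forall (i : 'I_m), (i == m.+1 :> nat) = false.
  by move=> i; rewrite ltn_eqF // ltnS ltnW.
have E6 : M = Fm m.+1 a *m hk m.+2 c *m (Fm m.+1 b)^T.
  by rewrite FHF; apply/matrixP => i j; rewrite !mxE /e /u.
have E1 : row' ord_max (col' ord_max (row' ord_max (col' ord_max M))) = hk m u.
  by apply/matrixP => i j; rewrite !mxE /e !lift_max !hb'.
have E2 : row' ord_max (col' ord_max M) = hk m.+1 u.
  by apply/matrixP => i j; rewrite !mxE /e !lift_max !hb.
have E3 : row' (Ordinal (leqnSn m.+1)) (col' (Ordinal (leqnSn m.+1)) M)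
          = Fm m a *m hk m.+1 c *m (Fm m b)^T.
  rewrite FHF; apply/matrixP => i j; rewrite !mxE /e !lift_m1.
  by case: (i == m :> nat); case: (j == m :> nat); rewrite /= ?eqxx ?hb.
have E4 : row' (Ordinal (leqnSn m.+1)) (col' ord_max M)
          = Fm m a *m hk m.+1 (fun t => b * c t + c t.+1).
  rewrite FH; apply/matrixP => i j; rewrite !mxE /e !lift_m1 lift_max.
  by case: (i == m :> nat); rewrite /= ?eqxx ?hb.
have E5 : row' ord_max (col' (Ordinal (leqnSn m.+1)) M)
          = hk m.+1 (fun t => a * c t + c t.+1) *m (Fm m b)^T.
  rewrite HF; apply/matrixP => i j; rewrite !mxE /e !lift_m1 lift_max.
  by case: (j == m :> nat); rewrite /= ?eqxx ?hb.
rewrite E1 E2 E3 E4 E5 E6 !det_mulmx !det_tr !det_Fm in Des.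
have s1 : (-1:R)^+m.+1 * (-1)^+m.+1 = 1 by rewrite -exprD sgn2.
have s0 : (-1:R)^+m * (-1)^+m = 1 by rewrite -exprD sgn2.
exact: (alg s0 s1 Des).
Qed.
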